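(* Let $L:(0,\infty)\to(0,\infty)$ be slowly varying at $\infty$, let $\beta>0$, let $b_1,b_2,b_3$ be fixed positive constants with $b_2>b_3$, and let $A_{k_n}=e^{2\beta(n-1)}L(e^{2n-2})$. Then for any fixed $x_0>0$ with $x_0\ne e^{2\beta(r+1-b_1)}$ for all $r\in\mathbb{Z}$, there are only finitely many integers $n$ for which there exists a positive integer $m$ with \[ m-b_1+\frac{1}{2\beta}\log L(e^{2m-b_2})\le\frac{1}{2\beta}\log(A_{k_n}x_0)<m-b_1+\frac{1}{2\beta}\log L(e^{2m-b_3}). \] *)

(* Defs.v *)
From Stdlib Require Export Reals Lra ZArith.
Open Scope R_scope.

(* L : (0,oo) -> (0,oo), modelled as a total function R -> R that is
   positive on (0,oo); only its values on (0,oo) matter. *)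
Definition positive_on_pos (L : R -> R) : Prop :=
  forall x : R, 0 < x -> 0 < L x.

Definition slowly_varying (L : R -> R) : Prop :=
  positive_on_pos L /\
  forall lam : R, 0 < lam ->
    forall eps : R, 0 < eps ->
      exists M : R, forall x : R, M < x ->
        Rabs (L (lam * x) / L x - 1) < eps.

Definition A_kn (beta : R) (L : R -> R) (n : nat) : R :=
  exp (2 * beta * (INR n - 1)) * L (exp (2 * INR n - 2)).

(* Main.v *)
Require Import Defs.
From Stdlib Require Import Reals ZArith Lra Lia.
Open Scope R_scope.

Definition fL (beta : R) (L : R -> R) (t : R) := / (2 * beta) * ln (L (exp t)).

Lemma ln_shift (L : R -> R) (HL : slowly_varying L) s eta (He : 0 < eta) :
  exists T, forall t, T < t -> Rabs (ln (L (exp (t + s))) - ln (L (exp t))) < eta.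
Proof.
  destruct HL as [Hpos HL].
  set (ep := Rmin (1 - exp (- eta)) (exp eta - 1)).
  assert (H1 : exp (- eta) < 1).
  { rewrite <- exp_0. apply exp_increasing. lra. }
  assert (H2 : 1 < exp eta).
  { rewrite <- exp_0. apply exp_increasing. lra. }
  assert (He' : 0 < ep) by (unfold ep; apply Rmin_case; lra).
  destruct (HL (exp s) (exp_pos s) ep He') as [M HM].
  exists (Rabs M). intros t Ht.
  assert (HMt : M < exp t).
  { pose proof (exp_ineq1_le t). pose proof (Rle_abs M). lra. }
  specialize (HM _ HMt).
  rewrite Rmult_comm, <- exp_plus in HM.
  set (a := L (exp (t + s))) in *. set (b := L (exp t)) in *.
  assert (Ha : 0 < a) by apply Hpos, exp_pos.
  assert (Hb : 0 < b) by apply Hpos, exp_pos.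
  assert (Hr : 0 < a / b) by (apply Rdiv_lt_0_compat; auto).
  assert (Hd : ln a - ln b = ln (a / b)).
  { unfold Rdiv. rewrite ln_mult, ln_Rinv; auto; try lra; apply Rinv_0_lt_compat; auto. }
  rewrite Hd.
  assert (ep <= 1 - exp (- eta)) by apply Rmin_l.
  assert (ep <= exp eta - 1) by apply Rmin_r.
  apply Rabs_def2 in HM. destruct HM as [HM1 HM2].
  assert (ln (a / b) < ln (exp eta)) by (apply ln_increasing; auto; lra).
  assert (ln (exp (- eta)) < ln (a / b)) by (apply ln_increasing; [apply exp_pos | lra]).
  rewrite ln_exp in *. apply Rabs_def1; lra.
Qed.

Lemma f_shift (L : R -> R) beta (HL : slowly_varying L) (Hb : 0 < beta) s eta (He : 0 < eta) :
  exists K : nat, forall k, (K <= k)%nat ->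
    Rabs (fL beta L (2 * INR k - 2 + s) - fL beta L (2 * INR k - 2)) < eta.
Proof.
  destruct (ln_shift L HL s (2 * beta * eta)) as [T HT].
  { apply Rmult_lt_0_compat; lra. }
  destruct (INR_archimed 1 (Rabs T + 2) Rlt_0_1) as [K HK]. rewrite Rmult_1_r in HK.
  exists K. intros k Hk.
  apply le_INR in Hk.
  assert (T < 2 * INR k - 2) by (pose proof (Rle_abs T); pose proof (Rabs_pos T); lra).
  specialize (HT _ H).
  unfold fL. rewrite <- Rmult_minus_distr_l, Rabs_mult.
  rewrite Rabs_pos_eq by (left; apply Rinv_0_lt_compat; lra).
  apply Rmult_lt_reg_l with (2 * beta); [lra|].
  rewrite <- Rmult_assoc, Rinv_r, Rmult_1_l by lra. exact HT.
Qed.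

Lemma abs_le_elim x a : Rabs x <= a -> - a <= x <= a.
Proof. intro H. pose proof (Rle_abs x). pose proof (Rle_abs (- x)). rewrite Rabs_Ropp in *. split; lra. Qed.

Lemma abs_le_intro x a : - a <= x -> x <= a -> Rabs x <= a.
Proof. intros. unfold Rabs. destruct (Rcase_abs x); lra. Qed.

Lemma abs_lt_elim x a : Rabs x < a -> - a < x < a.
Proof. intro H. pose proof (Rle_abs x). pose proof (Rle_abs (- x)). rewrite Rabs_Ropp in *. split; lra. Qed.

Lemma fin_bound (h : nat -> R) (K : nat) : exists B, forall m, (m < K)%nat -> h m <= B.
Proof.
  induction K as [|K [B HB]].
  - exists 0. intros; lia.
  - exists (Rmax B (h K)). intros m Hm.
    destruct (Nat.eq_dec m K) as [->|Hne].
    + apply Rmax_r.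
    + eapply Rle_trans; [apply HB; lia | apply Rmax_l].
Qed.

Theorem lemmaA4 (L : R -> R) (beta b1 b2 b3 x0 : R)
  (HL : slowly_varying L) (Hbeta : 0 < beta)
  (Hb1 : 0 < b1) (Hb2 : 0 < b2) (Hb3 : 0 < b3) (Hb23 : b3 < b2)
  (Hx0 : 0 < x0)
  (Hx0r : forall r : Z, x0 <> exp (2 * beta * (IZR r + 1 - b1))) :
  exists N : nat, forall n : nat,
    (exists m : nat, (0 < m)%nat /\
       INR m - b1 + / (2 * beta) * ln (L (exp (2 * INR m - b2)))
         <= / (2 * beta) * ln (A_kn beta L n * x0) /\
       / (2 * beta) * ln (A_kn beta L n * x0)
         < INR m - b1 + / (2 * beta) * ln (L (exp (2 * INR m - b3)))) ->
    (n < N)%nat.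
Proof.
  pose proof HL as [Hpos _].
  set (g := fun k : nat => fL beta L (2 * INR k - 2)).
  set (p := fun k : nat => fL beta L (2 * INR k - b2)).
  set (q := fun k : nat => fL beta L (2 * INR k - b3)).
  set (y := / (2 * beta) * ln x0 + b1 - 1).
  assert (Htr : forall n, / (2 * beta) * ln (A_kn beta L n * x0) = INR n + y - b1 + g n).
  { intro n. unfold A_kn, g, fL, y.
    assert (0 < L (exp (2 * INR n - 2))) by apply Hpos, exp_pos.
    rewrite !ln_mult, ln_exp; try apply exp_pos; auto;
      try (apply Rmult_lt_0_compat; auto; apply exp_pos).
    field. lra. }
  assert (Hyz : forall z : Z, y <> IZR z).
  { intros z Hz. apply (Hx0r z). rewrite <- (exp_ln x0) by auto. f_equal.
    assert (E : ln x0 = 2 * beta * (/ (2 * beta) * ln x0)) by (field; lra).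
    rewrite E. unfold y in Hz. f_equal. lra. }
  set (u := up y).
  destruct (archimed y) as [Hu1 Hu2]. fold u in Hu1, Hu2.
  assert (Hyu : IZR u - 1 < y).
  { destruct (Rle_lt_or_eq_dec (IZR u - 1) y) as [|E]; [lra|auto|].
    exfalso. apply (Hyz (u - 1)%Z). rewrite minus_IZR. simpl. lra. }
  set (dl := Rmin (y - (IZR u - 1)) (IZR u - y)).
  assert (Hdl : 0 < dl) by (unfold dl; apply Rmin_case; lra).
  assert (Hdist : forall z : Z, dl <= Rabs (y - IZR z)).
  { intro z. pose proof (Rmin_l (y - (IZR u - 1)) (IZR u - y)).
    pose proof (Rmin_r (y - (IZR u - 1)) (IZR u - y)). fold dl in H, H0.
    destruct (Z_le_gt_dec z (u - 1)) as [Hz|Hz].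
    - apply IZR_le in Hz. rewrite minus_IZR in Hz. simpl in Hz.
      rewrite Rabs_pos_eq; lra.
    - assert (Hz' : (u <= z)%Z) by lia. apply IZR_le in Hz'.
      rewrite Rabs_minus_sym, Rabs_pos_eq; lra. }
  set (eta := Rmin (1/2) (dl / (2 * Rabs y + 3))).
  assert (Hay : 0 < 2 * Rabs y + 3) by (pose proof (Rabs_pos y); lra).
  assert (Heta : 0 < eta).
  { unfold eta. apply Rmin_case; [lra|]. apply Rdiv_lt_0_compat; auto. }
  assert (Heta2 : eta <= 1/2) by apply Rmin_l.
  assert (Heta3 : eta * (2 * Rabs y + 3) <= dl).
  { apply Rle_trans with (dl / (2 * Rabs y + 3) * (2 * Rabs y + 3)).
    - apply Rmult_le_compat_r; [lra|apply Rmin_r].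
    - right. field. lra. }
  destruct (f_shift L beta HL Hbeta 2 eta Heta) as [K1 HK1].
  destruct (f_shift L beta HL Hbeta (2 - b2) eta Heta) as [K2 HK2].
  destruct (f_shift L beta HL Hbeta (2 - b3) eta Heta) as [K3 HK3].
  set (K := Nat.max K1 (Nat.max K2 K3)).
  assert (Hg : forall k, (K <= k)%nat -> Rabs (g (S k) - g k) < eta).
  { intros k Hk. unfold g. rewrite S_INR.
    replace (2 * (INR k + 1) - 2) with (2 * INR k - 2 + 2) by ring.
    apply HK1. lia. }
  assert (Hp : forall k, (K <= k)%nat -> Rabs (p k - g k) < eta).
  { intros k Hk. unfold p, g.
    replace (2 * INR k - b2) with (2 * INR k - 2 + (2 - b2)) by ring.
    apply HK2. lia. }
  assert (Hq : forall k, (K <= k)%nat -> Rabs (q k - g k) < eta).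
  { intros k Hk. unfold q, g.
    replace (2 * INR k - b3) with (2 * INR k - 2 + (2 - b3)) by ring.
    apply HK3. lia. }
  assert (Htel : forall a, (K <= a)%nat -> forall j, Rabs (g (a + j)%nat - g a) <= eta * INR j).
  { intros a Ha j. induction j as [|j IH].
    - rewrite Nat.add_0_r. unfold Rminus. rewrite Rplus_opp_r, Rabs_R0. simpl. lra.
    - rewrite Nat.add_succ_r, S_INR.
      pose proof (Rabs_triang (g (S (a + j)) - g (a + j)%nat) (g (a + j)%nat - g a)).
      replace (g (S (a + j)) - g (a + j)%nat + (g (a + j)%nat - g a))
        with (g (S (a + j)) - g a) in H by ring.
      pose proof (Hg (a + j)%nat ltac:(lia)). lra. }
  assert (Hgg : forall m n, (K <= m)%nat -> (K <= n)%nat ->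
     Rabs (g m - g n) <= eta * Rabs (INR m - INR n)).
  { intros m n Hm Hn. destruct (le_ge_dec n m) as [H|H].
    - replace m with (n + (m - n))%nat at 1 by lia.
      rewrite (Rabs_pos_eq (INR m - INR n)).
      + rewrite <- minus_INR by lia. apply Htel; auto.
      + apply le_INR in H. lra.
    - replace n with (m + (n - m))%nat at 1 by lia.
      rewrite Rabs_minus_sym, (Rabs_minus_sym (INR m)).
      rewrite (Rabs_pos_eq (INR n - INR m)).
      + rewrite <- minus_INR by lia. apply Htel; auto.
      + apply le_INR in H. lra. }
  destruct (fin_bound (fun m => INR m + q m) K) as [B HB].
  destruct (INR_archimed 1 (2 * Rabs (B - y - g K)) Rlt_0_1) as [N0 HN0].
  rewrite Rmult_1_r in HN0.
  exists (Nat.max K N0). intros n [m [Hm0 [H1 H2]]].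
  destruct (Nat.lt_ge_cases n (Nat.max K N0)) as [|HnN]; [assumption|exfalso].
  rewrite Htr in H1, H2.
  change (/ (2 * beta) * ln (L (exp (2 * INR m - b2)))) with (p m) in H1.
  change (/ (2 * beta) * ln (L (exp (2 * INR m - b3)))) with (q m) in H2.
  assert (HnK : (K <= n)%nat) by lia.
  assert (HnN0 : INR N0 <= INR n) by (apply le_INR; lia).
  assert (HnKr : INR K <= INR n) by (apply le_INR; lia).
  destruct (Nat.lt_ge_cases m K) as [HmK|HmK].
  - specialize (HB m HmK). simpl in HB.
    pose proof (Htel K (le_n K) (n - K)%nat) as Ht.
    replace (K + (n - K))%nat with n in Ht by lia.
    rewrite minus_INR in Ht by lia.
    apply abs_le_elim in Ht.
    assert (eta * (INR n - INR K) <= 1/2 * (INR n - INR K)).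
    { apply Rmult_le_compat_r; lra. }
    pose proof (Rle_abs (B - y - g K)). pose proof (pos_INR K).
    lra.
  - pose proof (Hgg m n HmK HnK) as HG.
    pose proof (Hp m HmK) as HP. pose proof (Hq m HmK) as HQ.
    apply abs_le_elim in HG. apply abs_lt_elim in HP. apply abs_lt_elim in HQ.
    set (D := INR m - INR n) in *.
    assert (HD : D = IZR (Z.of_nat m - Z.of_nat n)).
    { unfold D. rewrite minus_IZR, <- !INR_IZR_INZ. reflexivity. }
    pose proof (Hdist (Z.of_nat m - Z.of_nat n)%Z) as Hdd. rewrite <- HD in Hdd.
    assert (Habs : Rabs (y - D) <= eta * Rabs D + eta).
    { apply abs_le_intro; unfold D in *; lra. }
    assert (HDb : Rabs D <= 2 * Rabs y + 1).
    { pose proof (Rabs_triang y (D - y)). replace (y + (D - y)) with D in H by ring.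
      rewrite Rabs_minus_sym in H.
      assert (eta * Rabs D <= 1/2 * Rabs D) by (apply Rmult_le_compat_r; [apply Rabs_pos|lra]).
      lra. }
    assert (eta * Rabs D <= eta * (2 * Rabs y + 1)) by (apply Rmult_le_compat_l; lra).
    lra.
Qed.
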